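(* Let $f:\mathbb{R}^d\to\mathbb{R}$ be differentiable and assume: (a) there is $f^{\inf}\in\mathbb{R}$ with $f(x)\ge f^{\inf}$ for all $x\in\mathbb{R}^d$; (b) there is ${\bf L}\in\mathbb{S}^d_{+}$ such that $f(x)\le f(y)+\langle\nabla f(y),x-y\rangle+\tfrac12\langle {\bf L}(x-y),x-y\rangle$ for all $x,y\in\mathbb{R}^d$. Let ${\bf D}\in\mathbb{S}^d_{++}$ and let $({\bf S}^k)_{k\ge0}$, $({\bf T}^k)_{k\ge0}$ be sequences of random matrices such that ${\bf S}^k,{\bf T}^k\in\mathbb{S}^d_+$, the ${\bf S}^k$ are i.i.d. with some distribution $\mathcal S$, the ${\bf T}^k$ are i.i.d. with some distribution $\mathcal T$, and $\mathbb{E}[{\bf S}^k]=\mathbb{E}[{\bf T}^k]={\bf I}_d$ for all $k$. Fix $x^0\in\mathbb{R}^d$. Then for every $K\ge1$, $$\frac1K\sum_{k=0}^{K-1}\mathbb{E}\big[\|\nabla f(x^k)\|_{{\bf D}}^2\big]\le\frac{2(f(x^0)-f^{\inf})}{K},$$ provided one of the following holds: (i) $x^{k+1}=x^k-{\bf D}{\bf S}^k\nabla f(x^k)$ for all $k\ge0$ (det-CGD1) and $\mathbb{E}[{\bf S}^k{\bf D}{\bf L}{\bf D}{\bf S}^k]\preceq{\bf D}$; (ii) $x^{k+1}=x^k-{\bf T}^k{\bf D}\nabla f(x^k)$ for all $k\ge0$ (det-CGD2) and $\mathbb{E}[{\bf D}{\bf T}^k{\bf L}{\bf T}^k{\bf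 D}]\preceq{\bf D}$.
   Context: $\mathbb{S}^d_{+}$ (resp. $\mathbb{S}^d_{++}$) denotes the set of $d\times d$ symmetric positive semidefinite (resp. positive definite) matrices; $\preceq$ is the Loewner order. For ${\bf Q}\in\mathbb{S}^d_{+}$, $\|x\|_{{\bf Q}}^2:=\langle {\bf Q}x,x\rangle$. All expectations appearing are assumed finite. *)

(* Defs.v *)
From HB Require Import structures.
From mathcomp Require Import all_boot all_order all_algebra.
From mathcomp Require Import all_classical all_reals all_analysis.
Set Implicit Arguments. Unset Strict Implicit. Unset Printing Implicit Defensive.
Import Order.TTheory GRing.Theory Num.Theory.
Import numFieldNormedType.Exports.
Local Open Scope classical_set_scope.
Local Open Scope ring_scope.

Section Defs.
Variables (R : realType) (n : nat).

Definition inner (x y : 'cV[R]_n) : R := (x^T *m y) 0 0.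

Definition qnorm (Q : 'M[R]_n) (x : 'cV[R]_n) : R := inner (Q *m x) x.

Definition psd (M : 'M[R]_n) : Prop :=
  M^T = M /\ forall x : 'cV[R]_n, 0 <= inner (M *m x) x.

Definition pd (M : 'M[R]_n) : Prop :=
  M^T = M /\ forall x : 'cV[R]_n, x != 0 -> 0 < inner (M *m x) x.

Definition loewner_le (A B : 'M[R]_n) : Prop := psd (B - A).

Definition grad (f : 'cV[R]_n -> R) (x : 'cV[R]_n) : 'cV[R]_n :=
  \col_i derive f x (delta_mx i 0 : 'cV[R]_n).

End Defs.

Section RandomMatrices.
Context {dT : measure_display} {Omega : measurableType dT} {R : realType}.
Variables (P : probability Omega R) (n : nat).

Definition rand_mx (X : Omega -> 'M[R]_n) : Prop :=
  forall i j, measurable_fun setT (fun w => X w i j).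

Definition mx_integrable (X : Omega -> 'M[R]_n) : Prop :=
  forall i j, P.-integrable setT (fun w => (X w i j)%:E).

Definition Emx (X : Omega -> 'M[R]_n) : 'M[R]_n :=
  \matrix_(i, j) fine ('E_P[fun w => X w i j])%E.

Definition mx_event (X : Omega -> 'M[R]_n) (B : 'I_n -> 'I_n -> set R)
  : set Omega := [set w | forall i j, B i j (X w i j)].

Definition borel_rect (B : 'I_n -> 'I_n -> set R) : Prop :=
  forall i j, measurable (B i j).

(* i.i.d. sequence of random matrices: measurable, identically distributed
   (same law on the product sigma-algebra, which is generated by the
   pi-system of Borel rectangles) and mutually independent (product rule
   over every finite subfamily and every choice of Borel rectangles) *)
Definition iid_mx (X : nat -> Omega -> 'M[R]_n) : Prop :=
  [/\ forall k, rand_mx (X k),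
      forall k B, borel_rect B -> P (mx_event (X k) B) = P (mx_event (X 0%N) B)
    & forall (J : seq nat) (B : nat -> 'I_n -> 'I_n -> set R),
        uniq J -> (forall k, borel_rect (B k)) ->
        P (\bigcap_(k in [set` J]) mx_event (X k) (B k))
        = (\prod_(k <- J) P (mx_event (X k) (B k)))%E].

End RandomMatrices.

(* Main.v *)
Require Import Defs.
From HB Require Import structures.
From mathcomp Require Import all_boot all_order all_algebra.
From mathcomp Require Import all_classical all_reals all_analysis.
From mathcomp Require Import measurable_realfun.
From mathcomp Require Import ring lra.
Set Implicit Arguments. Unset Strict Implicit. Unset Printing Implicit Defensive.
Import Order.TTheory GRing.Theory Num.Theory.
Import numFieldNormedType.Exports.
Local Open Scope classical_set_scope.
Local Open Scope ring_scope.
Section Indep.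
Context {dT : measure_display} {Omega : measurableType dT} {R : realType}.
Variable P : probability Omega R.
Local Open Scope ereal_scope.

Lemma indep_lambda (G : set (set Omega)) (H : set Omega) :
  measurable H -> setI_closed G -> G `<=` measurable ->
  (forall A, G A -> P (A `&` H) = P A * P H) ->
  forall A, <<s G>> A -> P (A `&` H) = P A * P H.
Proof.
move=> mH GI Gm GP.
pose Hs := [set A | measurable A /\ P (A `&` H) = P A * P H].
suff: <<s G>> `<=` Hs by move=> sub A /sub[].
apply: lambda_system_subset => //; last by move=> A GA; split; [exact: Gm|exact: GP].
split.
- by [].
- by split; [exact: measurableT|rewrite setTI probability_setT mul1e].
- move=> A B BA [mA eA] [mB eB]; split; first exact: measurableD.
  have -> : (A `\` B) `&` H = (A `&` H) `\` (B `&` H).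
    by apply/seteqP; split => x /=; [move=> [[? ?] ?]; split => // -[]|move=> [[? ?] nb]; split => //; split => // ?; apply: nb].
  rewrite measureD; [|exact: measurableI|exact: measurableI|].
  + rewrite measureD // ?(setIidr BA).
    have -> : (A `&` H) `&` (B `&` H) = B `&` H.
      by apply/seteqP; split => x /=; [case=> -[]|move=> [bx hx]; split; split => //; apply: BA].
    transitivity (P A * P H - P B * P H); first by congr (_ - _).
    rewrite muleBl //; first exact: fin_num_measure.
    by apply: fin_num_adde_defl; rewrite fin_numN; apply: fin_num_measure.
    by apply: (le_lt_trans (probability_le1 P mA)); rewrite ltry.
  + by apply: (le_lt_trans (probability_le1 P (measurableI _ _ mA mH))); rewrite ltry.
- move=> F ndF HF.
  have mF n : measurable (F n) by case: (HF n).
  split; first exact: bigcupT_measurable.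
  rewrite setI_bigcupl.
  have ndFH : {homo (fun n => F n `&` H) : n m / (n <= m)%N >-> (n <= m)%O}.
    move=> n m nm; apply/subsetPset => x [Fx Hx]; split => //.
    by move/subsetPset: (ndF n m nm); apply.
  have c1 := nondecreasing_cvg_mu (mu:=P) (F:=fun n => F n `&` H) (fun n => measurableI _ _ (mF n) mH)
     (bigcupT_measurable _ (fun n => measurableI _ _ (mF n) mH)) ndFH.
  have c2 := nondecreasing_cvg_mu (mu:=P) mF (bigcupT_measurable _ mF) ndF.
  have fH : P H \is a fin_num by apply: fin_num_measure.
  have c3 := cvgeZr fH c2.
  have e : (fun n => (P \o F) n * P H) = P \o (fun n => F n `&` H).
    by apply/funext => n /=; rewrite (proj2 (HF n)).
  rewrite e in c3.
  exact: (cvg_unique _ c1 c3).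
Qed.
End Indep.
Section IIDgen.
Context {dT : measure_display} {Omega : measurableType dT} {R : realType}.
Variable P : probability Omega R.
Variable n : nat.
Variable X : nat -> Omega -> 'M[R]_n.
Hypothesis hX : iid_mx P X.
Local Open Scope ereal_scope.

Definition Gk (k : nat) : set (set Omega) :=
  [set A | exists B : nat -> 'I_n -> 'I_n -> set R, (forall j, borel_rect (B j)) /\
     A = \bigcap_(j in [set` iota 0 k]) mx_event (X j) (B j)].
Definition Hk (k : nat) : set (set Omega) :=
  [set A | exists B : 'I_n -> 'I_n -> set R, borel_rect B /\ A = mx_event (X k) B].

Lemma mx_event_measurable j B : borel_rect B -> measurable (mx_event (X j) B).
Proof.
move=> hB; have [mX _ _] := hX.
have -> : mx_event (X j) B = \bigcap_(p in [set` enum {: 'I_n * 'I_n}])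
    ((fun w => X j w p.1 p.2) @^-1` B p.1 p.2).
  apply/seteqP; split => w /=.
    by move=> h p _; exact: h.
  by move=> h a b; exact: (h (a, b) (mem_enum _ _)).
rewrite bigcap_seq; apply: bigsetI_measurable => p _.
by rewrite -[X in measurable X]setTI; apply: mX => //; exact: hB.
Qed.

Lemma Gk_meas k : Gk k `<=` measurable.
Proof.
move=> A [B [hB ->]]; rewrite bigcap_seq; apply: bigsetI_measurable => j _.
exact: mx_event_measurable.
Qed.

Lemma Hk_meas k : Hk k `<=` measurable.
Proof. by move=> A [B [hB ->]]; exact: mx_event_measurable. Qed.

Lemma Gk_setI k : setI_closed (Gk k).
Proof.
move=> _ _ [B1 [h1 ->]] [B2 [h2 ->]].
exists (fun j a b => B1 j a b `&` B2 j a b); split.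
  by move=> j a b; apply: measurableI; [exact: h1|exact: h2].
apply/seteqP; split => w /=.
  by move=> [g1 g2] j jk a b; split; [exact: g1|exact: g2].
by move=> g; split => j jk a b; have [] := g j jk a b.
Qed.

Lemma Hk_setI k : setI_closed (Hk k).
Proof.
move=> _ _ [B1 [h1 ->]] [B2 [h2 ->]].
exists (fun a b => B1 a b `&` B2 a b); split.
  by move=> a b; apply: measurableI; [exact: h1|exact: h2].
apply/seteqP; split => w /=.
  by move=> [g1 g2] a b; split; [exact: g1|exact: g2].
by move=> g; split => a b; have [] := g a b.
Qed.

Lemma gen_indep k A H : Gk k A -> Hk k H -> P (A `&` H) = P A * P H.
Proof.
move=> [B [hB ->]] [C [hC ->]].
have [_ _ hI] := hX.
pose B' j := if j == k then C else B j.
have hB' j : borel_rect (B' j) by rewrite /B'; case: eqP.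
have e : \bigcap_(j in [set` iota 0 k]) mx_event (X j) (B j) `&` mx_event (X k) C
   = \bigcap_(j in [set` iota 0 k.+1]) mx_event (X j) (B' j).
  rewrite !bigcap_seq -addn1 iotaD big_cat /= big_cons big_nil setIT.
  congr (_ `&` _); last by rewrite /B' eqxx.
  rewrite big_seq_cond [RHS]big_seq_cond; apply: eq_bigr => j.
  by rewrite mem_iota add0n => /andP[/andP[_ jk] _]; rewrite /B' (ltn_eqF jk).
rewrite e hI ?iota_uniq // hI ?iota_uniq //.
rewrite -addn1 iotaD big_cat /= big_cons big_nil mule1.
congr (_ * _); last by rewrite /B' eqxx.
rewrite big_seq_cond [RHS]big_seq_cond; apply: eq_bigr => j.
by rewrite mem_iota add0n => /andP[/andP[_ jk] _]; rewrite /B' (ltn_eqF jk).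
Qed.

Lemma sigma_indep k A H : <<s Gk k>> A -> <<s Hk k>> H -> P (A `&` H) = P A * P H.
Proof.
move=> sA sH.
have mH : measurable H.
  move: sH; apply: smallest_sub => //; first exact: sigma_algebra_measurable.
  exact: Hk_meas.
have mA : measurable A.
  move: sA; apply: smallest_sub => //; first exact: sigma_algebra_measurable.
  exact: Gk_meas.
apply: (indep_lambda mH (@Gk_setI k) (@Gk_meas k)) => // A' GA'.
rewrite setIC muleC.
apply: (indep_lambda (Gk_meas GA') (@Hk_setI k) (@Hk_meas k)) => // H' HH'.
rewrite setIC muleC; exact: (gen_indep GA' HH').
Qed.

End IIDgen.
Section ProdIndep.
Context {dT : measure_display} {Omega : measurableType dT} {R : realType}.
Variable P : probability Omega R.
Local Open Scope ereal_scope.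

Lemma id_meas_alias (G : set (set Omega)) : G `<=` measurable ->
  measurable_fun [set: Omega] (id : Omega -> g_sigma_algebraType G).
Proof.
move=> hG _ Y sY; rewrite setTI preimage_id.
move: sY; apply: smallest_sub => //; first exact: sigma_algebra_measurable.
Qed.

Definition idA (G : set (set Omega)) (hG : G `<=` measurable) :
  {mfun Omega >-> g_sigma_algebraType G} :=
  HB.pack (id : Omega -> g_sigma_algebraType G)
    (isMeasurableFun.Build _ _ _ _ (id : Omega -> g_sigma_algebraType G) (id_meas_alias hG)).

Definition PA (G : set (set Omega)) (hG : G `<=` measurable) :
  probability (g_sigma_algebraType G) R := distribution P (idA hG).

Lemma PA_integral (G : set (set Omega)) (hG : G `<=` measurable)
  (h : g_sigma_algebraType G -> \bar R) :
  measurable_fun setT h -> (forall v, 0 <= h v) ->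
  \int[PA hG]_v h v = \int[P]_w h w.
Proof. by move=> mh h0; rewrite /PA ge0_integral_distribution. Qed.

Variables (G H : set (set Omega)) (hG : G `<=` measurable) (hH : H `<=` measurable).
Hypothesis hind : forall A B, <<s G>> A -> <<s H>> B -> P (A `&` B) = P A * P B.

Lemma psi_meas : measurable_fun [set: Omega]
  (fun w : Omega => ((w : g_sigma_algebraType G), (w : g_sigma_algebraType H))).
Proof. exact: measurable_fun_pair (id_meas_alias hG) (id_meas_alias hH). Qed.

Definition psiA : {mfun Omega >-> (g_sigma_algebraType G * g_sigma_algebraType H)%type} :=
  HB.pack (fun w : Omega => ((w : g_sigma_algebraType G), (w : g_sigma_algebraType H)))
    (isMeasurableFun.Build _ _ _ _ _ psi_meas).

Lemma indep_fubini (F : (g_sigma_algebraType G * g_sigma_algebraType H)%type -> \bar R) :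
  measurable_fun setT F -> (forall z, 0 <= F z) ->
  \int[P]_w F (w, w) = \int[PA hG]_v \int[PA hH]_u F (v, u).
Proof.
move=> mF F0.
rewrite -(fubini_tonelli1 F mF F0).
have -> : \int[P]_w F (w, w) = \int[P]_w (F \o psiA) w by [].
rewrite -ge0_integral_distribution //.
apply: eq_measure_integral => A mA _ /=.
apply/esym; apply: product_measure_unique => // A1 A2 mA1 mA2.
Qed.

End ProdIndep.
Section CM.
Context {d : measure_display} {T : measurableType d} {R : realType}.

Definition qfl (N : nat) (y : R) : R := (Num.floor (y * N.+1%:R))%:~R / N.+1%:R.

Lemma qfl_err N y : `|y - qfl N y| <= N.+1%:R^-1.
Proof.
have c0 : (0 : R) < N.+1%:R by rewrite ltr0n.
have /andP[h1 h2] := floor_itv (y * N.+1%:R).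
rewrite /qfl ger0_norm.
  rewrite lerBlDr -(@ler_pM2r _ N.+1%:R) // mulrDl mulVf ?gt_eqF //.
  rewrite divfK ?gt_eqF // addrC; apply: ltW; move: h2; by rewrite intrD.
by rewrite subr_ge0 ler_pdivrMr.
Qed.

Lemma meas_floor_eq (g : T -> R) (z : int) (c : R) : measurable_fun setT g ->
  measurable [set t | Num.floor (g t * c) = z].
Proof.
move=> mg.
have -> : [set t | Num.floor (g t * c) = z] =
   (fun t => g t * c) @^-1` `[z%:~R, (z + 1)%:~R[.
  apply/seteqP; split => t /=.
    by move=> <-; rewrite in_itv /=; exact: floor_itv.
  by rewrite in_itv /= => h; apply/eqP; rewrite floor_eq.
rewrite -[X in measurable X]setTI; apply: measurable_funM => //.
Qed.

Lemma cont_meas (m p : nat) (F : 'M[R]_(m, p) -> R) (v : T -> 'M[R]_(m, p)) :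
  continuous F -> (forall i j, measurable_fun setT (fun t => v t i j)) ->
  measurable_fun setT (F \o v).
Proof.
move=> cF mv.
apply: (measurable_fun_cvg (h := fun N t => F (map_mx (qfl N) (v t)))).
- move=> N _ Y mY; rewrite setTI.
  pose c : R := N.+1%:R.
  pose Mz (z : {ffun 'I_m * 'I_p -> int}) : 'M[R]_(m, p) :=
    \matrix_(i, j) ((z (i, j))%:~R / c).
  have -> : (fun t => F (map_mx (qfl N) (v t))) @^-1` Y =
      \bigcup_(z : {ffun 'I_m * 'I_p -> int})
        [set t | Y (F (Mz z)) /\ forall i j, Num.floor (v t i j * c) = z (i, j)].
    apply/seteqP; split => t /=.
      move=> Yt; exists [ffun ij => Num.floor (v t ij.1 ij.2 * c)] => //; split.
        suff -> : Mz [ffun ij => Num.floor (v t ij.1 ij.2 * c)] = map_mx (qfl N) (v t) by [].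
        by apply/matrixP => i j; rewrite !mxE ffunE.
      by move=> i j; rewrite ffunE.
    move=> [z _ [Yz hz]].
    suff <- : Mz z = map_mx (qfl N) (v t) by [].
    by apply/matrixP => i j; rewrite !mxE /qfl hz.
  apply: countable_bigcupT_measurable; first exact: countableP.
  move=> z; case: (pselect (Y (F (Mz z)))) => hY.
    have -> : [set t | Y (F (Mz z)) /\ forall i j, Num.floor (v t i j * c) = z (i, j)] =
        \bigcap_(ij in [set` enum {: 'I_m * 'I_p}]) [set t | Num.floor (v t ij.1 ij.2 * c) = z ij].
      apply/seteqP; split => t /=.
        by move=> [_ h] [i j] _; exact: h.
      by move=> h; split => // i j; exact: (h (i, j) (mem_enum _ _)).
    rewrite bigcap_seq; apply: bigsetI_measurable => ij _.
    exact: meas_floor_eq.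
  have -> : [set t | Y (F (Mz z)) /\ forall i j, Num.floor (v t i j * c) = z (i, j)] = set0.
    by apply/seteqP; split => t //= [].
  exact: measurable0.
- move=> t _; apply: (continuous_cvg _ (cF (v t))).
  apply/cvg_ballP => e e0.
  near=> N; split => // i j; rewrite mxE.
  rewrite -ball_normE /=; apply: (le_lt_trans (qfl_err N _)).
  near: N; exact: (near_infty_natSinv_lt (PosNum e0)).
Unshelve. all: end_near.
Qed.
End CM.
Section GradMeas.
Context {d : measure_display} {T : measurableType d} {R : realType}.

Lemma grad_meas (m : nat) (f : 'cV[R]_m -> R) (v : T -> 'cV[R]_m) :
  (forall y, differentiable f y) ->
  (forall i j, measurable_fun setT (fun t => v t i j)) ->
  forall i j, measurable_fun setT (fun t => grad f (v t) i j).
Proof.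
move=> hf mv i j.
have cf : continuous f by move=> y; exact: differentiable_continuous.
pose e : 'cV[R]_m := delta_mx i 0.
pose u (N : nat) : R := N.+1%:R^-1.
apply: (measurable_fun_cvg
  (h := fun N t => (u N)^-1 * (f (u N *: e + v t) - f (v t)))).
- move=> N; apply: measurable_funM; first exact: measurable_cst.
  apply: measurable_funB.
    apply: (cont_meas (F := f) (v := fun t => u N *: e + v t)) => // a b.
    by under eq_fun do rewrite !mxE; apply: measurable_funD => //; exact: measurable_cst.
  exact: (cont_meas (F := f)).
- move=> t _; rewrite /grad mxE.
  have hd := diff_derivable (v := e) (hf (v t)).
  have := (cvgr_dnbhsP _ _ _).1 hd u.
  apply; split.
    by move=> N; rewrite /u invr_eq0 pnatr_eq0.
  apply/cvgrPdist_lt => eps eps0; near=> N.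
  rewrite sub0r normrN ger0_norm ?invr_ge0 ?ler0n //.
  near: N; exact: (near_infty_natSinv_lt (PosNum eps0)).
Unshelve. all: end_near.
Qed.
End GradMeas.
Lemma quad_expand {R : comRingType} (n : nat) (M : 'M[R]_n) (u v : 'cV[R]_n) :
  (u^T *m M *m v) 0 0 = \sum_(b < n) \sum_(a < n) (u a 0 * v b 0) * M a b.
Proof.
rewrite mxE; apply: eq_bigr => b _; rewrite mxE big_distrl /=.
by apply: eq_bigr => a _; rewrite !mxE; ring.
Qed.

Section Lin.
Context {dT : measure_display} {Omega : measurableType dT} {R : realType}.
Variable P : probability Omega R.
Local Open Scope ereal_scope.

Lemma lin_exp (n : nat) (N : Omega -> 'M[R]_n) (u v : 'cV[R]_n) :
  mx_integrable P N ->
  P.-integrable setT (fun w => ((u^T *m N w *m v) 0 0)%:E) /\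
  \int[P]_w ((u^T *m N w *m v) 0 0)%:E = ((u^T *m Emx P N *m v) 0 0)%:E.
Proof.
move=> hN.
have e : (fun w => ((u^T *m N w *m v) 0 0)%:E) =
    (fun w => \sum_(b < n) \sum_(a < n) ((u a 0 * v b 0)%:E * (N w a b)%:E)).
  apply/funext => w; rewrite quad_expand -sumEFin; apply: eq_bigr => b _.
  by rewrite -sumEFin; apply: eq_bigr => a _; rewrite EFinM.
rewrite e; split.
  apply: integrable_sum => // b _; apply: integrable_sum => // a _.
  exact: integrableZl.
rewrite integral_sum //; last first.
  move=> b; apply: integrable_sum => // a _; exact: integrableZl.
rewrite quad_expand -sumEFin; apply: eq_bigr => b _.
rewrite integral_sum //; last by move=> a; exact: integrableZl.
rewrite -sumEFin; apply: eq_bigr => a _.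
rewrite integralZl // [RHS]EFinM; congr (_ * _).
rewrite /Emx mxE unlock /= fineK //.
exact: integrable_fin_num (hN a b).
Qed.
End Lin.
Section Inner.
Context {dT : measure_display} {Omega : measurableType dT} {R : realType}.
Variable P : probability Omega R.
Local Open Scope ereal_scope.

Lemma inner_gen (n : nat) (h : Omega -> R) (c0 : R) (N1 N2 : Omega -> 'M[R]_n)
  (u1 v1 g : 'cV[R]_n) (q : R) :
  measurable_fun setT h ->
  (forall w, (0 <= h w)%R) ->
  (forall w, (h w <= c0 - (u1^T *m N1 w *m v1) 0 0 + 2^-1 * (g^T *m N2 w *m g) 0 0)%R) ->
  mx_integrable P N1 -> mx_integrable P N2 ->
  ((u1^T *m Emx P N1 *m v1) 0 0 = q)%R ->
  ((g^T *m Emx P N2 *m g) 0 0 <= q)%R ->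
  \int[P]_w (h w)%:E <= (c0 - 2^-1 * q)%:E.
Proof.
move=> mh h0 hle i1 i2 e1 e2.
have [I1 E1] := lin_exp u1 v1 i1.
have [I2 E2] := lin_exp g g i2.
have Ic : P.-integrable setT (fun _ : Omega => c0%:E).
  exact: (finite_measure_integrable_cst P c0 measurableT).
have Ib := integrableB measurableT Ic I1.
have Iz := integrableZl measurableT (2^-1) I2.
have Ir := integrableD measurableT Ib Iz.
apply: le_trans (ge0_le_integral P measurableT _ _ (measurable_int _ Ir) _) _.
- by move=> w _; rewrite lee_fin.
- exact/measurable_EFinP.
- by move=> w _; rewrite -EFinM -EFinB -EFinD lee_fin.
rewrite (integralD measurableT Ib Iz).
rewrite (integralB measurableT Ic I1).
  have hc : \int[P]_(w in setT) (c0%:E) = c0%:E.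
    by rewrite (integral_cst P measurableT) -[RHS]mule1; congr (_ * _); exact: probability_setT.
  rewrite integralZl // E1 E2 hc.
  rewrite -EFinM -EFinB -EFinD lee_fin; rewrite e1.
  have : (2^-1 * (g^T *m Emx P N2 *m g) 0 0 <= 2^-1 * q)%R.
    by rewrite ler_pM2l // invr_gt0 ltr0n.
  lra.
Qed.
End Inner.
Section MxMeas.
Context {d0 : measure_display} {T : measurableType d0} {R : realType}.

Definition mxm (m p : nat) (M : T -> 'M[R]_(m, p)) :=
  forall i j, measurable_fun setT (fun t => M t i j).

Lemma mxm_cst m p (C : 'M[R]_(m, p)) : mxm (fun _ => C).
Proof. by move=> i j; exact: measurable_cst. Qed.

Lemma mxm_mul m p r (M : T -> 'M[R]_(m, p)) (N : T -> 'M[R]_(p, r)) :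
  mxm M -> mxm N -> mxm (fun t => M t *m N t).
Proof.
move=> hM hN i j; under eq_fun do rewrite mxE.
by apply: measurable_sum => k; apply: measurable_funM.
Qed.

Lemma mxm_sub m p (M N : T -> 'M[R]_(m, p)) :
  mxm M -> mxm N -> mxm (fun t => M t - N t).
Proof.
by move=> hM hN i j; under eq_fun do rewrite !mxE; apply: measurable_funB.
Qed.

Lemma mxm_tr m p (M : T -> 'M[R]_(m, p)) : mxm M -> mxm (fun t => (M t)^T).
Proof. by move=> hM i j; under eq_fun do rewrite mxE; exact: hM. Qed.

End MxMeas.
Section Main.
Context {dT : measure_display} {Omega : measurableType dT} {R : realType}.
Variable P : probability Omega R.
Variables (d : nat) (f : 'cV[R]_d -> R) (finf : R) (D : 'M[R]_d).
Variables (X : nat -> Omega -> 'M[R]_d) (x0 : 'cV[R]_d) (x : nat -> Omega -> 'cV[R]_d).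
Variable b : bool.

Definition Aof (M : 'M[R]_d) := if b then D *m M else M *m D.

Hypothesis hf : forall y, differentiable f y.
Hypothesis hinf : forall y, finf <= f y.
Hypothesis hX : iid_mx P X.
Hypothesis hx0 : forall w, x 0%N w = x0.
Hypothesis hxS : forall k w, x k.+1 w = x k w - Aof (X k w) *m grad f (x k w).
Hypothesis hInner : forall k (y : 'cV[R]_d),
  (\int[P]_w (f (y - Aof (X k w) *m grad f y) - finf)%:E
    <= (f y - finf - 2^-1 * qnorm D (grad f y))%:E)%E.
Hypothesis hq0 : forall y, 0 <= qnorm D y.

Lemma XG_meas k j : (j < k)%N ->
  mxm (fun w : g_sigma_algebraType (Gk X k) => X j w).
Proof.
move=> jk a c _ Y mY; rewrite setTI; apply: sub_sigma_algebra.
exists (fun j' a' c' => if [&& j' == j, a' == a & c' == c] then Y else setT); split.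
  by move=> j' a' c'; case: ifP.
apply/seteqP; split => w /=.
  move=> Yw j' _ a' c'; case: ifP => // /and3P[/eqP -> /eqP -> /eqP ->]; exact: Yw.
move=> h; have := h j _ a c; rewrite !eqxx /=; apply.
by rewrite /= mem_iota add0n jk.
Qed.

Lemma XH_meas k : mxm (fun w : g_sigma_algebraType (Hk X k) => X k w).
Proof.
move=> a c _ Y mY; rewrite setTI; apply: sub_sigma_algebra.
exists (fun a' c' => if (a' == a) && (c' == c) then Y else setT); split.
  by move=> a' c'; case: ifP.
apply/seteqP; split => w /=.
  move=> Yw a' c'; case: ifP => // /andP[/eqP -> /eqP ->]; exact: Yw.
by move=> h; have := h a c; rewrite !eqxx.
Qed.

Lemma Aof_meas {d0} {T : measurableType d0} (M : T -> 'M[R]_d) :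
  mxm M -> mxm (fun t => Aof (M t)).
Proof.
rewrite /Aof; case: b => hM.
  by apply: mxm_mul => //; exact: mxm_cst.
by apply: mxm_mul => //; exact: mxm_cst.
Qed.

Lemma grad_mxm {d0} {T : measurableType d0} (v : T -> 'cV[R]_d) :
  mxm v -> mxm (fun t => grad f (v t)).
Proof. by move=> hv; exact: grad_meas. Qed.

Lemma xG_meas k : forall j, (j <= k)%N ->
  mxm (fun w : g_sigma_algebraType (Gk X k) => x j w).
Proof.
elim => [_|j IH jk].
  by move=> a c; under eq_fun do rewrite hx0; exact: measurable_cst.
have hj : mxm (fun w : g_sigma_algebraType (Gk X k) => x j w) by apply: IH; exact: ltnW.
have -> : (fun w : g_sigma_algebraType (Gk X k) => x j.+1 w) =
   (fun w => x j w - Aof (X j w) *m grad f (x j w)).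
  by apply/funext => w; rewrite hxS.
apply: mxm_sub => //; apply: mxm_mul; last exact: grad_mxm.
exact: Aof_meas (XG_meas jk).
Qed.

Lemma xO_meas k : mxm (x k).
Proof.
move=> a c.
have hm := xG_meas (leqnn k) a c.
exact: (measurableT_comp hm (id_meas_alias (@Gk_meas _ _ _ P _ X hX k))).
Qed.

End Main.
Section Step.
Context {dT : measure_display} {Omega : measurableType dT} {R : realType}.
Variable P : probability Omega R.
Variables (d : nat) (f : 'cV[R]_d -> R) (finf : R) (D : 'M[R]_d).
Variables (X : nat -> Omega -> 'M[R]_d) (x0 : 'cV[R]_d) (x : nat -> Omega -> 'cV[R]_d).
Variable b : bool.
Hypothesis hf : forall y, differentiable f y.
Hypothesis hinf : forall y, finf <= f y.
Hypothesis hX : iid_mx P X.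
Hypothesis hx0 : forall w, x 0%N w = x0.
Hypothesis hxS : forall k w, x k.+1 w = x k w - Aof D b (X k w) *m grad f (x k w).
Hypothesis hInner : forall k (y : 'cV[R]_d),
  (\int[P]_w (f (y - Aof D b (X k w) *m grad f y) - finf)%:E
    <= (f y - finf - 2^-1 * qnorm D (grad f y))%:E)%E.
Hypothesis hq0 : forall y, 0 <= qnorm D y.
Local Open Scope ereal_scope.

Lemma cf : continuous f.
Proof. by move=> y; exact: differentiable_continuous. Qed.

Lemma phi_meas {d0} {T : measurableType d0} (v : T -> 'cV[R]_d) : mxm v ->
  measurable_fun setT (fun t => f (v t) - finf)%R.
Proof.
move=> hv; apply: measurable_funB; last exact: measurable_cst.
exact: (cont_meas (F := f) cf).
Qed.

Lemma q_meas {d0} {T : measurableType d0} (v : T -> 'cV[R]_d) : mxm v ->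
  measurable_fun setT (fun t => qnorm D (grad f (v t))).
Proof.
move=> hv; rewrite /qnorm /inner.
apply: (mxm_mul (M := fun t => (D *m grad f (v t))^T)).
  by apply: mxm_tr; apply: mxm_mul; [exact: mxm_cst|exact: grad_mxm].
exact: grad_mxm.
Qed.

Lemma step k :
  \int[P]_w (f (x k.+1 w) - finf)%:E + (2^-1)%:E * \int[P]_w (qnorm D (grad f (x k w)))%:E
     <= \int[P]_w (f (x k w) - finf)%:E.
Proof.
have hG := @Gk_meas _ _ _ P _ X hX k.
have hH := @Hk_meas _ _ _ P _ X hX k.
have hind := fun A B => @sigma_indep _ _ _ P _ X hX k A B.
pose TG := g_sigma_algebraType (Gk X k).
pose TH := g_sigma_algebraType (Hk X k).
have hxk : mxm (fun w : TG => x k w) := xG_meas hf hx0 hxS (leqnn k).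
pose F (z : (TG * TH)%type) : \bar R :=
  (f (x k z.1 - Aof D b (X k z.2) *m grad f (x k z.1)) - finf)%:E.
have mF : measurable_fun setT F.
  apply/measurable_EFinP; apply: phi_meas.
  apply: mxm_sub.
    by move=> a c; exact: (measurableT_comp (hxk a c) measurable_fst).
  apply: mxm_mul.
    apply: Aof_meas => a c.
    exact: (measurableT_comp (XH_meas a c) measurable_snd).
  apply: grad_mxm => // a c.
  exact: (measurableT_comp (hxk a c) measurable_fst).
have F0 : forall z, 0 <= F z by move=> z; rewrite lee_fin subr_ge0.
have e1 : \int[P]_w (f (x k.+1 w) - finf)%:E = \int[P]_w F (w, w).
  by apply: eq_integral => w _; rewrite hxS.
rewrite e1 (indep_fubini hG hH hind mF F0).
pose phi (v : Omega) := (f (x k v) - finf)%R.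
pose qq (v : Omega) := qnorm D (grad f (x k v)).
have hin v : \int[PA P hH]_u F (v, u) <= (phi v - 2^-1 * qq v)%:E.
  rewrite PA_integral //; first by rewrite /F /phi /qq /=; exact: (hInner k (x k v)).
  exact: measurable_fun_pair2.
have hin0 v : 0 <= (phi v - 2^-1 * qq v)%:E.
  by apply: le_trans (hin v); apply: integral_ge0.
have mr : measurable_fun [set: TG] (fun v => (phi v - 2^-1 * qq v)%:E).
  apply/measurable_EFinP; apply: measurable_funB; first exact: phi_meas.
  apply: measurable_funM; first exact: measurable_cst.
  exact: q_meas.
apply: le_trans.
  apply: leeD2r.
  apply: (ge0_le_integral (PA P hG) measurableT _ _ mr).
  - by move=> v _; apply: integral_ge0.
  - exact: (measurable_fun_fubini_tonelli_F F mF F0).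
  - by move=> v _; exact: hin v.
rewrite PA_integral //.
have mphiO : measurable_fun [set: Omega] phi by exact: phi_meas (xO_meas hf hX hx0 hxS k).
have mqO : measurable_fun [set: Omega] qq by exact: q_meas (xO_meas hf hX hx0 hxS k).
rewrite -ge0_integralZl_EFin //; last 2 first.
- by move=> w _; rewrite lee_fin.
- exact/measurable_EFinP.
rewrite -ge0_integralD //; last 3 first.
- exact: (measurableT_comp mr (id_meas_alias hG)).
- by move=> w _; rewrite lee_fin mulr_ge0 // invr_ge0.
- by apply/measurable_EFinP; apply: measurable_funM => //; exact: measurable_cst.
under eq_integral do rewrite -EFinM -EFinD subrK.
by [].
Qed.

End Step.
Section Tele.
Context {dT : measure_display} {Omega : measurableType dT} {R : realType}.
Variable P : probability Omega R.
Variables (d : nat) (f : 'cV[R]_d -> R) (finf : R) (D : 'M[R]_d).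
Variables (X : nat -> Omega -> 'M[R]_d) (x0 : 'cV[R]_d) (x : nat -> Omega -> 'cV[R]_d).
Variable b : bool.
Hypothesis hf : forall y, differentiable f y.
Hypothesis hinf : forall y, finf <= f y.
Hypothesis hX : iid_mx P X.
Hypothesis hx0 : forall w, x 0%N w = x0.
Hypothesis hxS : forall k w, x k.+1 w = x k w - Aof D b (X k w) *m grad f (x k w).
Hypothesis hInner : forall k (y : 'cV[R]_d),
  (\int[P]_w (f (y - Aof D b (X k w) *m grad f y) - finf)%:E
    <= (f y - finf - 2^-1 * qnorm D (grad f y))%:E)%E.
Hypothesis hq0 : forall y, 0 <= qnorm D y.
Local Open Scope ereal_scope.

Lemma tele K :
  \int[P]_w (f (x K w) - finf)%:E +
  (2^-1)%:E * \sum_(k < K) \int[P]_w (qnorm D (grad f (x k w)))%:E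
  <= (f x0 - finf)%:E.
Proof.
have I0 k : 0 <= \int[P]_w (qnorm D (grad f (x k w)))%:E.
  by apply: integral_ge0 => w _; rewrite lee_fin.
elim: K => [|K IH].
  rewrite big_ord0 mule0 adde0.
  under eq_integral do rewrite hx0.
  rewrite (integral_cst P measurableT) le_eqVlt; apply/orP; left; apply/eqP.
  by rewrite -[RHS]mule1; congr (_ * _); exact: probability_setT.
apply: le_trans IH; rewrite big_ord_recr /=.
rewrite ge0_muleDr //.
rewrite addeCA addeC.
apply: leeD2r.
exact: (step hf hinf hX hx0 hxS hInner hq0).
by apply: sume_ge0 => k _.
Qed.

Lemma sum_bound K :
  \sum_(k < K) \int[P]_w (qnorm D (grad f (x k w)))%:E <= (2 * (f x0 - finf))%:E.
Proof.
have I0 k : 0 <= \int[P]_w (qnorm D (grad f (x k w)))%:E.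
  by apply: integral_ge0 => w _; rewrite lee_fin.
have h1 : (2^-1)%:E * \sum_(k < K) \int[P]_w (qnorm D (grad f (x k w)))%:E
   <= (f x0 - finf)%:E.
  apply: le_trans (tele K); apply: leeDr.
  by apply: integral_ge0 => w _; rewrite lee_fin subr_ge0.
have -> : \sum_(k < K) \int[P]_w (qnorm D (grad f (x k w)))%:E =
   2%:E * ((2^-1)%:E * \sum_(k < K) \int[P]_w (qnorm D (grad f (x k w)))%:E).
  by rewrite muleA -EFinM divff ?mul1e // pnatr_eq0.
by rewrite EFinM; apply: lee_wpmul2l => //; rewrite lee_fin.
Qed.

End Tele.
Section Algebra.
Variables (R : realType) (n : nat).
Implicit Types (a z g : 'cV[R]_n) (M L D : 'M[R]_n).

Lemma innerN a z : inner a (- z) = - inner a z.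
Proof. by rewrite /inner mulmxN mxE. Qed.

Lemma trN m p (a : 'M[R]_(m, p)) : (- a)^T = - a^T.
Proof. by apply/matrixP => i j; rewrite !mxE. Qed.

Lemma innerNN L z : inner (L *m - z) (- z) = inner (L *m z) z.
Proof. by rewrite /inner mulmxN [L *m - z]mulmxN trN mulNmx opprK. Qed.

Lemma innerT M a z : inner (M *m a) z = (a^T *m M^T *m z) 0 0.
Proof. by rewrite /inner trmx_mul. Qed.

Lemma id1 D M g : D^T = D -> inner g (D *m M *m g) = ((D *m g)^T *m M *m g) 0 0.
Proof. by move=> hD; rewrite /inner trmx_mul hD !mulmxA. Qed.

Lemma id2 D M L g : D^T = D -> L^T = L -> M^T = M ->
  inner (L *m (D *m M *m g)) (D *m M *m g) = (g^T *m (M *m D *m L *m D *m M) *m g) 0 0.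
Proof. by move=> hD hL hM; rewrite /inner !trmx_mul hD hL hM !mulmxA. Qed.

Lemma id3 D M g : inner g (M *m D *m g) = (g^T *m M *m (D *m g)) 0 0.
Proof. by rewrite /inner !mulmxA. Qed.

Lemma id4 D M L g : D^T = D -> L^T = L -> M^T = M ->
  inner (L *m (M *m D *m g)) (M *m D *m g) = (g^T *m (D *m M *m L *m M *m D) *m g) 0 0.
Proof. by move=> hD hL hM; rewrite /inner !trmx_mul hD hL hM !mulmxA. Qed.

Lemma loew_bound D E g : D^T = D -> loewner_le E D ->
  (g^T *m E *m g) 0 0 <= qnorm D g.
Proof.
move=> hD [hs hp]; have := hp g; rewrite innerT hs /qnorm innerT hD.
by rewrite mulmxBr mulmxBl !mxE subr_ge0.
Qed.

Lemma qnorm_ge0 D : pd D -> forall g, 0 <= qnorm D g.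
Proof.
move=> [_ hp] g; have [->|gn0] := eqVneq g 0.
  by rewrite /qnorm /inner !mulmx0 mxE.
exact/ltW/hp.
Qed.
End Algebra.

Section Final.
Context {dT : measure_display} {Omega : measurableType dT} {R : realType}.
Variable P : probability Omega R.
Variables (d : nat) (f : 'cV[R]_d -> R) (finf : R) (L D : 'M[R]_d).
Hypothesis hf : forall y, differentiable f y.
Hypothesis hinf : forall y, finf <= f y.
Hypothesis hL : psd L.
Hypothesis hdesc : forall u v, f u <= f v + inner (grad f v) (u - v)
                      + 2^-1 * inner (L *m (u - v)) (u - v).
Hypothesis hD : pd D.

Lemma desc_step (y Z : 'cV[R]_d) :
  f (y - Z) <= f y - inner (grad f y) Z + 2^-1 * inner (L *m Z) Z.
Proof.
have := hdesc (y - Z) y.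
rewrite (_ : y - Z - y = - Z) ?innerNN ?innerN //.
by rewrite addrC addrA addNr add0r.
Qed.

Lemma hmeas_gen (X : Omega -> 'M[R]_d) (b : bool) (y : 'cV[R]_d) : mxm X ->
  measurable_fun setT (fun w => f (y - Aof D b (X w) *m grad f y) - finf).
Proof.
move=> hX; apply: (@phi_meas _ _ f finf hf _ _ (fun w => y - Aof D b (X w) *m grad f y)).
apply: mxm_sub; first exact: mxm_cst.
apply: mxm_mul; last exact: mxm_cst.
exact: Aof_meas.
Qed.

Lemma inner1 (X : nat -> Omega -> 'M[R]_d) :
  (forall k, mxm (X k)) -> (forall k w, psd (X k w)) ->
  (forall k, mx_integrable P (X k)) -> (forall k, Emx P (X k) = 1%:M) ->
  (forall k, mx_integrable P (fun w => X k w *m D *m L *m D *m X k w)) ->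
  (forall k, loewner_le (Emx P (fun w => X k w *m D *m L *m D *m X k w)) D) ->
  forall k (y : 'cV[R]_d),
  (\int[P]_w (f (y - Aof D true (X k w) *m grad f y) - finf)%:E
    <= (f y - finf - 2^-1 * qnorm D (grad f y))%:E)%E.
Proof.
move=> hm hp hi hE hi2 hlw k y.
have [hDT _] := hD; have [hLT _] := hL.
apply: (inner_gen (N1 := X k) (N2 := fun w => X k w *m D *m L *m D *m X k w)
  (u1 := D *m grad f y) (v1 := grad f y)).
- exact: hmeas_gen.
- by move=> w; rewrite subr_ge0.
- move=> w; have := desc_step y (D *m X k w *m grad f y).
  have [hXT _] := hp k w.
  rewrite /Aof id1 // id2 //; lra.
- exact: hi.
- exact: hi2.
- by rewrite hE mulmx1.
- exact: loew_bound.
Qed.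

Lemma inner2 (X : nat -> Omega -> 'M[R]_d) :
  (forall k, mxm (X k)) -> (forall k w, psd (X k w)) ->
  (forall k, mx_integrable P (X k)) -> (forall k, Emx P (X k) = 1%:M) ->
  (forall k, mx_integrable P (fun w => D *m X k w *m L *m X k w *m D)) ->
  (forall k, loewner_le (Emx P (fun w => D *m X k w *m L *m X k w *m D)) D) ->
  forall k (y : 'cV[R]_d),
  (\int[P]_w (f (y - Aof D false (X k w) *m grad f y) - finf)%:E
    <= (f y - finf - 2^-1 * qnorm D (grad f y))%:E)%E.
Proof.
move=> hm hp hi hE hi2 hlw k y.
have [hDT _] := hD; have [hLT _] := hL.
apply: (inner_gen (N1 := X k) (N2 := fun w => D *m X k w *m L *m X k w *m D)
  (u1 := grad f y) (v1 := D *m grad f y)).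
- exact: hmeas_gen.
- by move=> w; rewrite subr_ge0.
- move=> w; have := desc_step y (X k w *m D *m grad f y).
  have [hXT _] := hp k w.
  rewrite /Aof id3 // id4 //; lra.
- exact: hi.
- exact: hi2.
- by rewrite hE mulmx1 /qnorm innerT hDT mulmxA.
- exact: loew_bound.
Qed.
End Final.

Unset Implicit Arguments.

Theorem theorem1 (R : realType) (d : nat) (f : 'cV[R]_d -> R) (finf : R)
  (L D : 'M[R]_d) (dT : measure_display) (Omega : measurableType dT)
  (P : probability Omega R) (S Tm : nat -> Omega -> 'M[R]_d)
  (x0 : 'cV[R]_d) (x : nat -> Omega -> 'cV[R]_d) :
  (forall y, differentiable f y) ->
  (forall y, finf <= f y) ->
  psd L ->
  (forall u v, f u <= f v + inner (grad f v) (u - v)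
                      + 2^-1 * inner (L *m (u - v)) (u - v)) ->
  pd D ->
  (forall k w, psd (S k w)) -> (forall k w, psd (Tm k w)) ->
  iid_mx P S -> iid_mx P Tm ->
  (forall k, mx_integrable P (S k)) -> (forall k, mx_integrable P (Tm k)) ->
  (forall k, Emx P (S k) = 1%:M) -> (forall k, Emx P (Tm k) = 1%:M) ->
  (forall w, x 0%N w = x0) ->
  ( [/\ forall k w, x k.+1 w = x k w - D *m S k w *m grad f (x k w),
        forall k, mx_integrable P (fun w => S k w *m D *m L *m D *m S k w)
      & forall k, loewner_le (Emx P (fun w => S k w *m D *m L *m D *m S k w)) D]
  \/
    [/\ forall k w, x k.+1 w = x k w - Tm k w *m D *m grad f (x k w),
        forall k, mx_integrable P (fun w => D *m Tm k w *m L *m Tm k w *m D)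
      & forall k, loewner_le (Emx P (fun w => D *m Tm k w *m L *m Tm k w *m D)) D]
  ) ->
  forall K : nat, (1 <= K)%N ->
  ((K%:R)^-1%:E * \sum_(k < K) 'E_P[fun w => qnorm D (grad f (x k w))]
     <= ((2 * (f x0 - finf)) / K%:R)%:E)%E.
Proof.
  move=> hf hinf hL hdesc hD hSp hTp hSiid hTiid hSi hTi hSE hTE hx0 hcase K K1.
  have hq0 := qnorm_ge0 hD.
  have Kpos : (0 < K%:R :> R)%R by rewrite ltr0n.
  suff hb : (\sum_(k < K) 'E_P[fun w => qnorm D (grad f (x k w))]
              <= (2 * (f x0 - finf))%:E)%E.
    rewrite [X in (_ <= X)%E]EFinM [X in (_ <= X)%E]muleC; apply: lee_wpmul2l => //.
  under eq_bigr do rewrite unlock.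
  case: hcase => [[hxS hi2 hlw]|[hxS hi2 hlw]].
  - have [hm _ _] := hSiid.
    have hxS' : forall k w, x k.+1 w = x k w - Aof D true (S k w) *m grad f (x k w).
      by move=> k w; rewrite hxS.
    exact: (sum_bound hf hinf hSiid hx0 hxS'
      (inner1 hf hinf hL hdesc hD hm hSp hSi hSE hi2 hlw) hq0 K).
  - have [hm _ _] := hTiid.
    have hxS' : forall k w, x k.+1 w = x k w - Aof D false (Tm k w) *m grad f (x k w).
      by move=> k w; rewrite hxS.
    exact: (sum_bound hf hinf hTiid hx0 hxS'
      (inner2 hf hinf hL hdesc hD hm hTp hTi hTE hi2 hlw) hq0 K).
Qed.
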